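(* Let $(P,\le,A_1\ldots A_k)$ be a regular poset of width $w$ with node tree $(\mathcal{N},\prec)$, and let $\mathcal{F}\subseteq\mathcal{N}$ be ancestor-free. Then the edge poset $(\mathcal{F}_E,\le_E)$ has width at most $w^3$.
   Context: Let $(P,\le)$ be a finite poset of width $w$. For $A\subseteq P$ let $A{\uparrow}=\{y: x\le y\text{ for some }x\in A\}$, $A{\downarrow}=\{y: y\le x\text{ for some }x\in A\}$. For maximal antichains $A,B$ write $A\sqsubseteq B$ if $A\subseteq B{\downarrow}$, and $A\sqsubset B$ if also $A\ne B$. For disjoint antichains $A\sqsubset B$, $(A,B,<)$ is the bipartite graph with classes $A,B$ and edges $(a<b)$ for $a\in A,b\in B$, $a<b$; it is regular if every edge lies in a perfect matching. A regular poset $(P,\le,A_1\ldots A_k)$: $A_1,\dots,A_k$ are maximum antichains partitioning $P$, $(\{A_1,\dots,A_k\},\sqsubseteq)$ is a linear order with minimum $A_1$ and maximum $A_2$, $a<b$ for all $a\in A_1,b\in A_2$, and for every $t\in[2,k]$ and every $A_p\sqsubset A_s$ consecutive in $(\{A_1,\dots,A_t\},\sqsubseteq)$ the graph $(A_p,A_s,<)$ is regular. A node is a bipartite graph $(X,Y,<)$ where, for some such consecutive pair $A_p\sqsubset A_s$ (at some stage $t$), $X\subseteq A_p$, $Y\subseteq A_s$ and $X\cup Y$ is the vertex set of a connected component of $(A_p,A_s,<)$; $\mathrm{Int}(X,Y,<)=X{\uparrow}\cap Y{\downarrow}$. Node tree $(\mathcal{N},\prec)$: $\mathcal{N}$ is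 the set of all nodes; when for $t\ge3$ the antichain $A_t$ is inserted between $A_p\sqsubset A_s$ consecutive at stage $t-1$, each node $M$ of $(A_p,A_t,<)$ or $(A_t,A_s,<)$ is a child of the unique node $N$ of $(A_p,A_s,<)$ with $\mathrm{Int}(M)\subset\mathrm{Int}(N)$; this is a rooted tree with root $(A_1,A_2,<)$. A set $\mathcal{F}\subseteq\mathcal{N}$ is ancestor-free if no node of $\mathcal{F}$ is a descendant of another node of $\mathcal{F}$. For $\mathcal{F}\subseteq\mathcal{N}$, $\mathcal{F}_E$ is the set of all edges $(a<b)$ of nodes in $\mathcal{F}$, and the edge poset $(\mathcal{F}_E,\le_E)$ is the partial order in which for distinct edges $(a<b)<_E(c<d)$ iff $b\le c$. *)

(* Defs.v *)
From mathcomp Require Import all_boot all_order.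
Set Implicit Arguments. Unset Strict Implicit. Unset Printing Implicit Defensive.
Import Order.Theory.
Local Open Scope order_scope.

Section RegularPosets.
Context {d : Order.disp_t} {T : finPOrderType d}.

Definition antichain (B : {set T}) : bool :=
  [forall x in B, forall y in B, (x <= y) ==> (x == y)].

Definition width : nat := \max_(B : {set T} | antichain B) #|B|.

Definition maximum_antichain (B : {set T}) : bool :=
  antichain B && (#|B| == width).

Definition up (B : {set T}) : {set T} := [set y | [exists x in B, x <= y]].
Definition down (B : {set T}) : {set T} := [set y | [exists x in B, y <= x]].

Definition sqle (A B : {set T}) : bool := A \subset down B.
Definition sqlt (A B : {set T}) : bool := sqle A B && (A != B).

Definition perfect_matching (X Y : {set T}) (M : {set T * T}) : bool :=
  [forall e in M, [&& e.1 \in X, e.2 \in Y & e.1 < e.2]] &&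
  [forall a in X, #|[set e in M | e.1 == a]| == 1%N] &&
  [forall b in Y, #|[set e in M | e.2 == b]| == 1%N].

Definition regular_bip (X Y : {set T}) : Prop :=
  forall a b, a \in X -> b \in Y -> a < b ->
    exists M : {set T * T}, perfect_matching X Y M && ((a, b) \in M).

Definition bip_adj (Ap As : {set T}) : rel T :=
  fun x y => [&& x \in Ap, y \in As & x < y] || [&& y \in Ap, x \in As & y < x].

Definition component_of (Ap As X Y : {set T}) : Prop :=
  X \subset Ap /\ Y \subset As /\
  exists2 v, v \in Ap :|: As & X :|: Y = [set u | connect (bip_adj Ap As) v u].

(** The regular poset data: A is indexed by 1..k. *)
Variable (A : nat -> {set T}) (k : nat).

Definition consecutive (t p s : nat) : Prop :=
  [/\ (1 <= p <= t)%N, (1 <= s <= t)%N, sqlt (A p) (A s) &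
      forall q, (1 <= q <= t)%N -> ~ (sqlt (A p) (A q) && sqlt (A q) (A s))].

Definition regular_poset : Prop :=
  (2 <= k)%N /\
  (forall i, (1 <= i <= k)%N -> maximum_antichain (A i)) /\
  (forall x : T, exists2 i, (1 <= i <= k)%N & x \in A i) /\
  (forall i j, (1 <= i <= k)%N -> (1 <= j <= k)%N -> i != j ->
      [disjoint A i & A j]) /\
  (forall i j, (1 <= i <= k)%N -> (1 <= j <= k)%N ->
      sqle (A i) (A j) || sqle (A j) (A i)) /\
  (forall i, (1 <= i <= k)%N -> sqle (A 1) (A i) && sqle (A i) (A 2)) /\
  (forall a b, a \in A 1 -> b \in A 2 -> a < b) /\
  (forall t p s, (2 <= t <= k)%N -> consecutive t p s ->
      regular_bip (A p) (A s)).

(** Nodes: pairs (X, Y) standing for the bipartite graph (X, Y, <). *)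
Definition node := ({set T} * {set T})%type.

Definition is_node (N : node) : Prop :=
  exists t p s, [/\ (2 <= t <= k)%N, consecutive t p s &
                    component_of (A p) (A s) N.1 N.2].

Definition Int (N : node) : {set T} := up N.1 :&: down N.2.

Definition child (M N : node) : Prop :=
  exists t p s,
     [/\ (3 <= t <= k)%N, consecutive t.-1 p s &
         sqlt (A p) (A t) && sqlt (A t) (A s)] /\
     [/\ component_of (A p) (A t) M.1 M.2 \/ component_of (A t) (A s) M.1 M.2,
         component_of (A p) (A s) N.1 N.2 &
         Int M \proper Int N].

Inductive descendant : node -> node -> Prop :=
  | desc_child M N : child M N -> descendant M N
  | desc_step M N O : child M N -> descendant N O -> descendant M O.

Definition ancestor_free (F : {set node}) : Prop :=
  forall M N, M \in F -> N \in F -> ~ descendant M N.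

Definition edges_of (F : {set node}) : {set T * T} :=
  [set e | [exists N in F, [&& e.1 \in N.1, e.2 \in N.2 & e.1 < e.2]]].

(** Antichains of the edge poset (F_E, <=_E): distinct e, f with e <_E f iff e.2 <= f.1. *)
Definition edge_antichain (F : {set node}) (S : {set T * T}) : Prop :=
  S \subset edges_of F /\
  forall e f, e \in S -> f \in S -> e != f -> ~~ (e.2 <= f.1).

End RegularPosets.

(* Main.v *)
Require Import Defs.
From mathcomp Require Import all_boot all_order.
Set Implicit Arguments. Unset Strict Implicit. Unset Printing Implicit Defensive.
Import Order.Theory.


Section Basics.
Variables (d : Order.disp_t) (T : finPOrderType d).

Lemma antichainP (B : {set T}) x y : antichain B -> x \in B -> y \in B -> (x <= y)%O -> x = y.
Proof.
move=> /forall_inP H xB yB le; have /forall_inP H2 := H x xB.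
by apply/eqP; move/implyP: (H2 y yB); apply.
Qed.

Lemma antichainI (B : {set T}) :
  (forall x y, x \in B -> y \in B -> (x <= y)%O -> x = y) -> antichain B.
Proof.
move=> H; apply/forall_inP=> x xB; apply/forall_inP=> y yB; apply/implyP=> le.
by apply/eqP; apply: H.
Qed.

Lemma width_ge (B : {set T}) : antichain B -> (#|B| <= @width d T)%N.
Proof. by move=> aB; rewrite /width; apply: (@leq_bigmax_cond _ (fun B => antichain B) (fun B => #|B|)). Qed.

Lemma inup (B : {set T}) y : (y \in up B) = [exists x in B, (x <= y)%O].
Proof. by rewrite inE. Qed.
Lemma indown (B : {set T}) y : (y \in down B) = [exists x in B, (y <= x)%O].
Proof. by rewrite inE. Qed.

Lemma upP (B : {set T}) y : reflect (exists2 x, x \in B & (x <= y)%O) (y \in up B).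
Proof. rewrite inup; exact: exists_inP. Qed.
Lemma downP (B : {set T}) y : reflect (exists2 x, x \in B & (y <= x)%O) (y \in down B).
Proof. rewrite indown; exact: exists_inP. Qed.

End Basics.

Section Comp.
Variables (d : Order.disp_t) (T : finPOrderType d).
Implicit Types (P Q X Y : {set T}).

Lemma connect_ind' (e : rel T) (phi : T -> Prop) x y :
  (forall a b, e a b -> phi a -> phi b) -> connect e x y -> phi x -> phi y.
Proof.
move=> H /connectP [p pth ->]; elim: p x pth => [|z p IH] x //= /andP [exz pth] px.
exact: IH pth (H _ _ exz px).
Qed.

Lemma bip_adj_sym P Q : symmetric (bip_adj P Q).
Proof. by move=> x y; rewrite /bip_adj orbC. Qed.

Lemma bip_adjE P Q x y : bip_adj P Q x y =
  [&& x \in P, y \in Q & (x < y)%O] || [&& y \in P, x \in Q & (y < x)%O].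
Proof. by []. Qed.

Lemma connect_in P Q v u : connect (bip_adj P Q) v u -> v \in P :|: Q -> u \in P :|: Q.
Proof.
move=> c; apply: (connect_ind' (phi := fun z => z \in P :|: Q)) c => a b.
by rewrite /bip_adj => /orP [/and3P [_ bQ _]|/and3P [bP _ _]] _; rewrite inE ?bQ ?bP ?orbT.
Qed.

Definition cls P Q v := [set u | connect (bip_adj P Q) v u].

Lemma comp_mk P Q v : v \in P :|: Q -> [disjoint P & Q] ->
  component_of P Q (cls P Q v :&: P) (cls P Q v :&: Q).
Proof.
move=> vPQ dis; split; first exact: subsetIr.
split; first exact: subsetIr.
exists v => //; rewrite -setIUr; apply/setIidPl/subsetP=> u; rewrite inE => c.
exact: connect_in c vPQ.
Qed.

Lemma comp_X P Q X Y : [disjoint P & Q] -> component_of P Q X Y ->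
  exists2 v, v \in P :|: Q & X = cls P Q v :&: P /\ Y = cls P Q v :&: Q.
Proof.
move=> dis [sX [sY [v vPQ eU]]]; exists v => //; rewrite /cls -eU.
split; apply/setP=> z; rewrite !inE.
- case zX: (z \in X); first by rewrite (subsetP sX _ zX).
  case zY: (z \in Y) => /=; last by [].
  have zQ := subsetP sY _ zY.
  by rewrite (disjointFl dis zQ).
- case zY: (z \in Y); first by rewrite (subsetP sY _ zY) orbT.
  case zX: (z \in X) => /=; last by [].
  have zP := subsetP sX _ zX.
  by rewrite (disjointFr dis zP).
Qed.

Lemma cls_sym P Q v u : u \in cls P Q v -> cls P Q u = cls P Q v.
Proof.
rewrite inE => c; have cs := sym_connect_sym (bip_adj_sym P Q).
apply/setP=> z; rewrite !inE; apply/idP/idP => c2.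
- exact: connect_trans c c2.
- by apply: connect_trans c2; rewrite cs.
Qed.

Lemma comp_eq P Q X Y X' Y' z : [disjoint P & Q] -> component_of P Q X Y -> component_of P Q X' Y' ->
  z \in X :|: Y -> z \in X' :|: Y' -> X = X' /\ Y = Y'.
Proof.
move=> dis c1 c2; have [v _ [-> ->]] := comp_X dis c1; have [v' _ [-> ->]] := comp_X dis c2.
rewrite -!setIUr => /setIP [z1 _] /setIP [z2 _].
by rewrite -(cls_sym z1) -(cls_sym z2).
Qed.

Lemma comp_closed P Q X Y x y : [disjoint P & Q] -> component_of P Q X Y ->
  x \in X :|: Y -> bip_adj P Q x y -> y \in X :|: Y.
Proof.
move=> dis c; have [v vPQ [eX eY]] := comp_X dis c.
rewrite eX eY -!setIUr !inE => /andP [cx _] a; apply/andP; split.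
  by apply: connect_trans cx (connect1 a).
by have := connect_in (connect_trans cx (connect1 a)) vPQ; rewrite inE.
Qed.

End Comp.

Section PM.
Variables (d : Order.disp_t) (T : finPOrderType d).

Lemma card1_uniq (S : {set T * T}) e1 e2 : #|S| == 1%N -> e1 \in S -> e2 \in S -> e1 = e2.
Proof. by move=> /cards1P [e ->]; rewrite !inE => /eqP -> /eqP ->. Qed.

Lemma pm_surplus (X Y : {set T}) (M : {set T * T}) (Q Tg : {set T}) c b :
  perfect_matching X Y M -> Q \subset X -> (c, b) \in M -> c \notin Q ->
  (forall q y, q \in Q -> y \in Y -> (q < y)%O -> y \in Tg) -> b \in Tg ->
  (#|Q| < #|Tg|)%N.
Proof.
move=> /andP [/andP [/forall_inP HM /forall_inP HX] /forall_inP HY] sQ cbM cQ HT bT.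
pose g q := if [pick e in M | e.1 == q] is Some e then e.2 else q.
have gP : forall q, q \in X -> (q, g q) \in M.
  move=> q qX; rewrite /g; case: pickP => [e /andP [eM /eqP <-]|H].
    by rewrite -surjective_pairing.
  have := HX q qX; move/cards1P => [e0 /setP /(_ e0)].
  by rewrite !inE eqxx (H e0).
have ginj : {in Q &, injective g}.
  move=> q1 q2 q1Q q2Q e.
  have m1 := gP q1 (subsetP sQ _ q1Q); have m2 := gP q2 (subsetP sQ _ q2Q).
  have /and3P [_ yY _] := HM _ m1.
  have : (q1, g q1) = (q2, g q2).
    by apply: (card1_uniq (HY _ yY)); rewrite inE /= ?m1 ?m2 -?e eqxx.
  by case.
have sub : b |: (g @: Q) \subset Tg.
  apply/subsetP=> y; rewrite !inE => /orP [/eqP ->//|/imsetP [q qQ ->]].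
  have /and3P [_ yY lt] := HM _ (gP q (subsetP sQ _ qQ)).
  exact: HT qQ yY lt.
have bnot : b \notin g @: Q.
  apply/imsetP=> [[q qQ eb]].
  have mq := gP q (subsetP sQ _ qQ).
  have /and3P [_ bY _] := HM _ cbM.
  have : (q, g q) = (c, b).
    by apply: (card1_uniq (HY _ bY)); rewrite inE /= ?mq ?cbM -?eb eqxx.
  case=> eqc _.
  by move: cQ; rewrite -eqc qQ.
move: (subset_leq_card sub); rewrite cardsU1 bnot card_in_imset //.
Qed.

End PM.

Lemma ex_argmax (u : nat) (P : pred nat) (f : nat -> nat) i0 : (i0 < u)%N -> P i0 ->
  exists q, [/\ (q < u)%N, P q & forall q', (q' < u)%N -> P q' -> (f q' <= f q)%N].
Proof.
move=> i0u Pi0.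
case: (@arg_maxnP _ (Ordinal i0u) (fun i : 'I_u => P i) (fun i : 'I_u => f i)) => //= q Pq H.
exists q; split=> // q' q'u Pq'; exact: (H (Ordinal q'u)).
Qed.

Lemma ex_argmin (u : nat) (P : pred nat) (f : nat -> nat) i0 : (i0 < u)%N -> P i0 ->
  exists q, [/\ (q < u)%N, P q & forall q', (q' < u)%N -> P q' -> (f q <= f q')%N].
Proof.
move=> i0u Pi0.
case: (@arg_minnP _ (Ordinal i0u) (fun i : 'I_u => P i) (fun i : 'I_u => f i)) => //= q Pq H.
exists q; split=> // q' q'u Pq'; exact: (H (Ordinal q'u)).
Qed.

Section CardU.
Variables (T : finType).
Lemma card_bigcup_le (I : finType) (P : pred I) (F : I -> {set T}) :
  (#|\bigcup_(i | P i) F i| <= \sum_(i | P i) #|F i|)%N.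
Proof.
apply: (big_ind2 (fun (X : {set T}) n => #|X| <= n)%N); first by rewrite cards0.
  move=> X1 n1 X2 n2 h1 h2; rewrite cardsU.
  exact: leq_trans (leq_subr _ _) (leq_add h1 h2).
by [].
Qed.
End CardU.

Section RP.
Variables (d : Order.disp_t) (T : finPOrderType d) (A : nat -> {set T}) (k : nat).
Hypothesis RP : regular_poset A k.
Variable x0 : T.

Notation w := (@width d T).
Definition inR i := (1 <= i <= k)%N.

Lemma k2 : (2 <= k)%N. Proof. by case: RP. Qed.
Lemma inR1 : inR 1. Proof. by rewrite /inR leqnn (leq_trans _ k2). Qed.
Lemma inR2 : inR 2. Proof. by rewrite /inR k2. Qed.
Lemma A_max i : inR i -> maximum_antichain (A i). Proof. by case: RP => _ [H] _ ; apply: H. Qed.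
Lemma A_anti i : inR i -> antichain (A i). Proof. by move/A_max/andP=> []. Qed.
Lemma A_card i : inR i -> #|A i| = w. Proof. by move/A_max/andP=> [_ /eqP]. Qed.
Lemma A_cover x : exists2 i, inR i & x \in A i. Proof. by case: RP => _ [_ [H]] _; apply: H. Qed.
Lemma A_disj i j : inR i -> inR j -> i != j -> [disjoint A i & A j].
Proof. by case: RP => _ [_ [_ [H]]] _; apply: H. Qed.
Lemma A_tot i j : inR i -> inR j -> sqle (A i) (A j) || sqle (A j) (A i).
Proof. by case: RP => _ [_ [_ [_ [H]]]] _; apply: H. Qed.
Lemma A_12 i : inR i -> sqle (A 1) (A i) && sqle (A i) (A 2).
Proof. by case: RP => _ [_ [_ [_ [_ [H]]]]] _; apply: H. Qed.
Lemma A_reg t p s : (2 <= t <= k)%N -> consecutive A t p s -> regular_bip (A p) (A s).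
Proof. by case: RP => _ [_ [_ [_ [_ [_ [_ H]]]]]]; apply: H. Qed.

Lemma level_uniq i j x : inR i -> inR j -> x \in A i -> x \in A j -> i = j.
Proof.
move=> Ri Rj xi xj; apply/eqP; apply/negPn/negP=> nij.
by move: (A_disj Ri Rj nij) => /disjoint_setI0 /setP /(_ x); rewrite !inE xi xj.
Qed.

Lemma w_pos : (0 < w)%N.
Proof.
apply: leq_trans (width_ge (B := [set x0]) _); first by rewrite cards1.
by apply: antichainI=> x y; rewrite !inE => /eqP -> /eqP ->.
Qed.

Lemma A_nonempty i : inR i -> exists x, x \in A i.
Proof.
move=> Ri; have: (0 < #|A i|)%N by rewrite A_card // w_pos.
by rewrite card_gt0 => /set0Pn.
Qed.

Lemma sqleP (X Y : {set T}) : reflect (forall x, x \in X -> exists2 y, y \in Y & (x <= y)%O) (sqle X Y).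
Proof.
apply: (iffP subsetP)=> H x /H; first by move/downP.
by move=> H2; apply/downP.
Qed.

Lemma sqle_down (X Y : {set T}) : sqle X Y -> down X \subset down Y.
Proof.
move/sqleP=> H; apply/subsetP=> z /downP [x xX zx].
have [y yY xy] := H x xX; apply/downP; exists y => //; exact: le_trans zx xy.
Qed.

Lemma sqle_refl (X : {set T}) : sqle X X.
Proof. by apply/sqleP=> x xX; exists x. Qed.

Lemma sqle_trans (X Y Z : {set T}) : sqle X Y -> sqle Y Z -> sqle X Z.
Proof.
move=> /sqleP H1 /sqleP H2; apply/sqleP=> x /H1 [y /H2 [z zZ yz] xy].
by exists z => //; exact: le_trans xy yz.
Qed.

Lemma sqle_antisym (X Y : {set T}) : antichain X -> antichain Y -> sqle X Y -> sqle Y X -> X = Y.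
Proof.
move=> aX aY /sqleP H1 /sqleP H2.
suff sub: forall X Y : {set T}, antichain X -> (forall x, x \in X -> exists2 y, y \in Y & (x <= y)%O) ->
   (forall x, x \in Y -> exists2 y, y \in X & (x <= y)%O) -> X \subset Y.
  by apply/eqP; rewrite eqEsubset !sub.
move=> X0 Y0 aX0 G1 G2; apply/subsetP=> x xX.
have [y yY xy] := G1 x xX; have [x' x'X yx'] := G2 y yY.
have e : x = x' by apply: (antichainP aX0 xX x'X); exact: le_trans xy yx'.
by subst x'; have -> : x = y by apply: le_anti; rewrite xy yx'.
Qed.

Lemma sqle_up i j : inR i -> inR j -> sqle (A i) (A j) -> A j \subset up (A i).
Proof.
move=> Ri Rj /sqleP H; apply/subsetP=> x xj; rewrite inup.
apply: contraT => nex.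
have nex' : forall a, a \in A i -> (a <= x)%O -> False.
  by move=> a ai ax; apply: (negP nex); apply/exists_inP; exists a.
have xi : x \notin A i.
  by apply/negP=> xi; apply: (nex' x xi).
have: antichain (x |: A i).
  apply: antichainI=> a b; rewrite !inE => /orP [/eqP->|ai] /orP [/eqP->|bi] //.
  - move=> xb; have [y yj by_] := H b bi.
    have ey : x = y by apply: (antichainP (A_anti Rj) xj yj); exact: le_trans xb by_.
    subst y; have : b = x by apply: le_anti; rewrite xb by_.
    by move=> eax; move: bi; rewrite eax (negbTE xi).
  - by move=> le; case: (nex' a ai le).
  - exact: antichainP (A_anti Ri) ai bi.
move/width_ge; rewrite cardsU1 xi A_card //.
by rewrite add1n ltnn.
Qed.

Definition r i := #|down (A i)|.

Lemma r_le i j : sqle (A i) (A j) -> (r i <= r j)%N.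
Proof. by move/sqle_down/subset_leq_card. Qed.

Lemma sub_down (X : {set T}) : X \subset down X.
Proof. by apply/subsetP=> x xX; apply/downP; exists x. Qed.

Lemma r_inj i j : inR i -> inR j -> r i = r j -> i = j.
Proof.
move=> Ri Rj.
suff H: forall i j, inR i -> inR j -> sqle (A i) (A j) -> r i = r j -> i = j.
  case/orP: (A_tot Ri Rj) => le e; first exact: H Ri Rj le e.
  by symmetry; exact: H Rj Ri le (esym e).
move=> {Ri Rj}i {}j Ri Rj le eqr.
have ed : down (A i) = down (A j).
  by apply/eqP; rewrite eqEcard sqle_down //=; move: eqr; rewrite /r => ->.
have le2 : sqle (A j) (A i) by rewrite /sqle ed sub_down.
have eA := sqle_antisym (A_anti Ri) (A_anti Rj) le le2.
have [x xi] := A_nonempty Ri.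
apply: (level_uniq Ri Rj xi); by rewrite -eA.
Qed.

Lemma r_lt_sqle i j : inR i -> inR j -> (r i < r j)%N -> sqle (A i) (A j).
Proof.
move=> Ri Rj lt; case/orP: (A_tot Ri Rj) => // /r_le le.
by move: (leq_trans lt le); rewrite ltnn.
Qed.

Lemma r_sqlt i j : inR i -> inR j -> (r i < r j)%N -> sqlt (A i) (A j).
Proof.
move=> Ri Rj lt; rewrite /sqlt r_lt_sqle //=; apply/eqP=> e.
by move: lt; rewrite /r e ltnn.
Qed.

Lemma sqlt_r i j : inR i -> inR j -> sqlt (A i) (A j) -> (r i < r j)%N.
Proof.
move=> Ri Rj /andP [le ne]; rewrite ltn_neqAle r_le // andbT.
by apply/eqP=> /(r_inj Ri Rj) e; move: ne; rewrite e eqxx.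
Qed.

Lemma le_level x y i j : inR i -> inR j -> x \in A i -> y \in A j -> (x <= y)%O -> (r i <= r j)%N.
Proof.
move=> Ri Rj xi yj xy; case/orP: (A_tot Ri Rj) => [/r_le //|/sqleP H].
have [z zi yz] := H y yj.
have exz : x = z by apply: (antichainP (A_anti Ri) xi zi); exact: le_trans xy yz.
subst z; have exy : x = y by apply: le_anti; rewrite xy yz.
by subst y; rewrite (level_uniq Ri Rj xi yj).
Qed.

Lemma lt_level x y i j : inR i -> inR j -> x \in A i -> y \in A j -> (x < y)%O -> (r i < r j)%N.
Proof.
move=> Ri Rj xi yj xy; rewrite ltn_neqAle (le_level Ri Rj xi yj (ltW xy)) andbT.
apply/eqP=> /(r_inj Ri Rj) e; subst j.
have exy := antichainP (A_anti Ri) xi yj (ltW xy).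
by rewrite exy ltxx in xy.
Qed.

Lemma consecE t p s : (t <= k)%N -> consecutive A t p s ->
  [/\ inR p, inR s, (r p < r s)%N &
      forall q, (1 <= q <= t)%N -> ~~ ((r p < r q) && (r q < r s))%N].
Proof.
move=> tk [/andP [p1 pt] /andP [s1 st] lt H].
have Rp : inR p by rewrite /inR p1 (leq_trans pt tk).
have Rs : inR s by rewrite /inR s1 (leq_trans st tk).
split=> //; first exact: sqlt_r.
move=> q /andP [q1 qt]; have Rq : inR q by rewrite /inR q1 (leq_trans qt tk).
apply/negP=> /andP [l1 l2]; apply: (H q); first by rewrite q1.
by rewrite !r_sqlt.
Qed.

Lemma consecI t p s : (t <= k)%N -> (1 <= p <= t)%N -> (1 <= s <= t)%N -> (r p < r s)%N ->
  (forall q, (1 <= q <= t)%N -> ~~ ((r p < r q) && (r q < r s))%N) -> consecutive A t p s.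
Proof.
move=> tk Hp Hs lt H.
have Rp : inR p by case/andP: Hp => p1 pt; rewrite /inR p1 (leq_trans pt tk).
have Rs : inR s by case/andP: Hs => p1 pt; rewrite /inR p1 (leq_trans pt tk).
split=> //; first exact: r_sqlt.
move=> q Hq; have Rq : inR q by case/andP: Hq => p1 pt; rewrite /inR p1 (leq_trans pt tk).
move=> /andP [/(sqlt_r Rp Rq) l1 /(sqlt_r Rq Rs) l2].
by move: (H q Hq); rewrite l1 l2.
Qed.

Lemma hall i j (Z : {set T}) : inR i -> inR j -> sqle (A i) (A j) -> Z \subset A i ->
  (#|Z| <= #|up Z :&: A j|)%N.
Proof.
move=> Ri Rj /sqleP H sZ.
have aC : antichain ((A j :\: up Z) :|: Z).
  apply: antichainI=> x y; rewrite !inE => /orP [/andP [xu xj]|xZ] /orP [/andP [yu yj]|yZ] le.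
  - exact: antichainP (A_anti Rj) xj yj le.
  - have [y' y'j yy'] := H y (subsetP sZ _ yZ).
    have exy : x = y' by apply: (antichainP (A_anti Rj) xj y'j); exact: le_trans le yy'.
    by subst y'; apply: le_anti; rewrite le yy'.
  - by case/negP: yu; apply/exists_inP; exists x.
  - exact: antichainP (A_anti Ri) (subsetP sZ _ xZ) (subsetP sZ _ yZ) le.
have := width_ge aC; rewrite cardsU.
have -> : (A j :\: up Z) :&: Z = set0.
  apply/setP=> z; rewrite !inE; case zZ: (z \in Z); rewrite ?andbF //=.
  by rewrite (_ : [exists x in Z, (x <= z)%O]) //; apply/exists_inP; exists z.
rewrite cards0 subn0 -(A_card Rj) -(cardsID (up Z) (A j)) setIC.
by rewrite [X in (_ <= X)%N]addnC leq_add2l.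
Qed.

Lemma disjA p s : inR p -> inR s -> (r p < r s)%N -> [disjoint A p & A s].
Proof. by move=> Rp Rs lt; apply: A_disj => //; apply/eqP=> e; move: lt; rewrite e ltnn. Qed.

Lemma comp_props p s (X Y : {set T}) : inR p -> inR s -> (r p < r s)%N ->
  component_of (A p) (A s) X Y ->
  [/\ X \subset A p, Y \subset A s, Y \subset up X & X \subset down Y].
Proof.
move=> Rp Rs lt c; have dis := disjA Rp Rs lt.
have [sX [sY _]] := c; split=> //.
- apply/subsetP=> y yY; have yAs := subsetP sY _ yY.
  have /upP [x xAp xy] := subsetP (sqle_up Rp Rs (r_lt_sqle Rp Rs lt)) _ yAs.
  have xy' : (x < y)%O.
    rewrite lt_neqAle xy andbT; apply/eqP=> e; subst y.
    by move: (disjointFr dis xAp); rewrite yAs.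
  have : x \in X :|: Y.
    apply: (comp_closed dis c (x := y)); first by rewrite inE yY orbT.
    by rewrite bip_adjE xAp yAs xy' orbT.
  rewrite inE => /orP [xX|xY]; first by apply/upP; exists x.
  by move: (disjointFr dis xAp); rewrite (subsetP sY _ xY).
- apply/subsetP=> x xX; have xAp := subsetP sX _ xX.
  have /sqleP H := r_lt_sqle Rp Rs lt.
  have [y yAs xy] := H x xAp.
  have xy' : (x < y)%O.
    rewrite lt_neqAle xy andbT; apply/eqP=> e; subst y.
    by move: (disjointFr dis xAp); rewrite yAs.
  have : y \in X :|: Y.
    apply: (comp_closed dis c (x := x)); first by rewrite inE xX.
    by rewrite bip_adjE xAp yAs xy'.
  rewrite inE => /orP [yX|yY]; last by apply/downP; exists y.
  by move: (disjointFr dis (subsetP sX _ yX)); rewrite yAs.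
Qed.

Lemma comp_edge p s (X Y : {set T}) : inR p -> inR s -> (r p < r s)%N ->
  component_of (A p) (A s) X Y -> exists x y, [/\ x \in X, y \in Y & (x < y)%O].
Proof.
move=> Rp Rs lt c; have [sX sY sYu sXd] := comp_props Rp Rs lt c.
have dis := disjA Rp Rs lt.
have [_ [_ [v vPQ eU]]] := c.
have vXY : v \in X :|: Y by rewrite eU inE connect0.
suff [x xX] : exists x, x \in X.
  have /downP [y yY xy] := subsetP sXd _ xX; exists x, y; split=> //.
  rewrite lt_neqAle xy andbT; apply/eqP=> e; subst y.
  by move: (disjointFr dis (subsetP sX _ xX)); rewrite (subsetP sY _ yY).
move: vXY; rewrite inE => /orP [vX|vY]; first by exists v.
by have /upP [x xX _] := subsetP sYu _ vY; exists x.
Qed.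


Lemma adj_in_Y p s (X Y : {set T}) x y : inR p -> inR s -> (r p < r s)%N ->
  component_of (A p) (A s) X Y -> x \in X -> y \in A s -> (x < y)%O -> y \in Y.
Proof.
move=> Rp Rs lt c xX yAs xy; have dis := disjA Rp Rs lt.
have [sX [sY _]] := c.
have : y \in X :|: Y.
  apply: (comp_closed dis c (x := x)); first by rewrite inE xX.
  by rewrite bip_adjE (subsetP sX _ xX) yAs xy.
rewrite inE => /orP [yX|//].
by move: (disjointFr dis (subsetP sX _ yX)); rewrite yAs.
Qed.

Definition cnode t p s (N : {set T} * {set T}) :=
  [/\ (2 <= t <= k)%N, consecutive A t p s & component_of (A p) (A s) N.1 N.2].

Lemma consec_le t p s : consecutive A t p s -> (1 <= p <= t)%N /\ (1 <= s <= t)%N.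
Proof. by case. Qed.

Lemma lt_of_le_ne (a b : T) : (a <= b)%O -> a != b -> (a < b)%O.
Proof. by move=> le ne; rewrite lt_neqAle ne le. Qed.

Lemma ne_of_disj (P Q : {set T}) a b : [disjoint P & Q] -> a \in P -> b \in Q -> a != b.
Proof. by move=> dis aP bQ; apply/eqP=> e; subst b; move: (disjointFr dis aP); rewrite bQ. Qed.

Lemma pair_ext' (N1 N2 : T * T) : N1.1 = N2.1 -> N1.2 = N2.2 -> N1 = N2.
Proof. by case: N1 N2 => [a b] [c e] /= -> ->. Qed.

Lemma pair_ext (N1 N2 : {set T} * {set T}) : N1.1 = N2.1 -> N1.2 = N2.2 -> N1 = N2.
Proof. by case: N1 N2 => [a b] [c e] /= -> ->. Qed.

Lemma tree_desc n : forall t' p' s' (M : {set T} * {set T}) t p s (N : {set T} * {set T}),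
  (t' <= n)%N -> cnode t' p' s' M -> cnode t p s N ->
  (r p <= r p')%N -> (r s' <= r s)%N -> (p', s') != (p, s) ->
  (exists x y, [/\ x \in N.1, y \in M.2 & (x < y)%O]) -> descendant A k M N.
Proof.
elim: n => [|n IH] t' p' s' M t p s N tn [t'2 ct' cM] [t2 ct cN] lp ls ne [x [y [xN yM xy]]].
  by move: (leq_trans (andP t'2).1 tn).
have t'k : (t' <= k)%N by case/andP: t'2.
have tk : (t <= k)%N by case/andP: t2.
have [Rp' Rs' lt' nb'] := consecE t'k ct'.
have [Rp Rs lt nb] := consecE tk ct.
have [/andP [p'1 p't'] /andP [s'1 s't']] := consec_le ct'.
have [/andP [p1 pt] /andP [s1 st]] := consec_le ct.
have t2' : (2 <= t)%N by case/andP: t2.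
have dis_p's' := disjA Rp' Rs' lt'.
have dis_ps := disjA Rp Rs lt.
have [x1 [y1 [x1M y1M x1y1]]] := comp_edge Rp' Rs' lt' cM.
have [sM1 sM2 sM2u sM1d] := comp_props Rp' Rs' lt' cM.
have Hp : p' != p -> (t < p')%N.
  move=> npp; rewrite ltnNge; apply/negP=> p'le.
  have lpp : (r p < r p')%N.
    by rewrite ltn_neqAle lp andbT; apply/eqP=> /(r_inj Rp Rp') e; move: npp; rewrite e eqxx.
  by move: (nb p' (introT andP (conj p'1 p'le))); rewrite lpp (leq_trans lt' ls).
have Hs : s' != s -> (t < s')%N.
  move=> nss; rewrite ltnNge; apply/negP=> s'le.
  have lss : (r s' < r s)%N.
    by rewrite ltn_neqAle ls andbT; apply/eqP=> /(r_inj Rs' Rs) e; move: nss; rewrite e eqxx.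
  by move: (nb s' (introT andP (conj s'1 s'le))); rewrite lss (leq_ltn_trans lp lt').
have ne' : (p' != p) || (s' != s).
  by move: ne; rewrite xpair_eqE negb_and.
case: (ltngtP p' s') => [ps|sp|eps]; last by move: lt'; rewrite eps ltnn.
- (* Case L: s' is the inserted antichain *)
  have ts' : (t < s')%N.
    case/orP: ne' => [/Hp tp|/Hs //]; exact: ltn_trans tp ps.
  have nss : s' != s by apply/eqP=> e; move: ts'; rewrite e ltnNge st.
  have lss : (r s' < r s)%N.
    by rewrite ltn_neqAle ls andbT; apply/eqP=> /(r_inj Rs' Rs) e; move: nss; rewrite e eqxx.
  have s'3 : (3 <= s')%N by apply: leq_ltn_trans t2' ts'.
  have ss' : (s < s')%N by apply: leq_ltn_trans st ts'.
  have [s2 [s2s' /andP [s21 ls's2] s2min]] :=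
    @ex_argmin s' (fun q => (1 <= q)%N && (r s' < r q)%N) r s ss' (introT andP (conj s1 lss)).
  have Rs2 : inR s2 by rewrite /inR s21 (leq_trans (ltnW s2s') (leq_trans s't' t'k)).
  have ls2 : (r s2 <= r s)%N by apply: s2min => //; rewrite s1 lss.
  have dis_s's2 := disjA Rs' Rs2 ls's2.
  have lp's2 : (r p' < r s2)%N by apply: ltn_trans lt' ls's2.
  have dis_p's2 := disjA Rp' Rs2 lp's2.
  have cons2 : consecutive A s'.-1 p' s2.
    apply: consecI.
    - exact: leq_trans (leq_pred _) (leq_trans s't' t'k).
    - by rewrite p'1 -ltnS (ltn_predK ps).
    - by rewrite s21 -ltnS (ltn_predK ps).
    - exact: lp's2.
    move=> q /andP [q1 qle]; apply/negP=> /andP [l1 l2].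
    have qs' : (q < s')%N by rewrite -(ltn_predK ps) ltnS.
    have Rq : inR q by rewrite /inR q1 (leq_trans (ltnW qs') (leq_trans s't' t'k)).
    case: (ltngtP (r q) (r s')) => [h|h|h].
    + move: (nb' q (introT andP (conj q1 (leq_trans (ltnW qs') s't')))).
      by rewrite l1 h.
    + by move: (s2min q qs' (introT andP (conj q1 h))); rewrite leqNgt l2.
    + by move: qs'; rewrite (r_inj Rq Rs' h) ltnn.
  pose C2 := cls (A p') (A s2) x1.
  pose N2 := (C2 :&: A p', C2 :&: A s2).
  have x1p' : x1 \in A p' := subsetP sM1 _ x1M.
  have cN2 : component_of (A p') (A s2) N2.1 N2.2.
    by apply: comp_mk dis_p's2; rewrite inE x1p'.
  pose phi z := (z \in A p' /\ z \in C2) \/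
                (z \in A s' /\ exists2 yy, yy \in A s2 & ((z < yy)%O /\ yy \in C2)).
  have /sqleP sq's2 := r_lt_sqle Rs' Rs2 ls's2.
  have phiM : forall z, z \in M.1 :|: M.2 -> phi z.
    have [v _ [eM1 eM2]] := comp_X dis_p's' cM.
    have x1v : x1 \in cls (A p') (A s') v by move: x1M; rewrite eM1 => /setIP [].
    move=> z; rewrite eM1 eM2 -setIUr => /setIP [zc _].
    rewrite -(cls_sym x1v) inE in zc.
    apply: (connect_ind' _ zc); last by left; split=> //; rewrite inE connect0.
    move=> a b; rewrite bip_adjE => /orP [/and3P [aP bS ab]|/and3P [bP aS ba]]
      [[aP' ac]|[aS' [yy yS [ayy yc]]]].
    + right; split=> //; have [yy yyS byy] := sq's2 b bS.
      have byy' : (b < yy)%O by apply: lt_of_le_ne byy (ne_of_disj dis_s's2 bS yyS).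
      exists yy => //; split=> //.
      rewrite inE; apply: connect_trans (_ : connect _ x1 a) (connect1 _).
        by move: ac; rewrite inE.
      by rewrite bip_adjE aP yyS (lt_le_trans ab (ltW byy')).
    + by move: (ne_of_disj dis_p's' aP aS'); rewrite eqxx.
    + by move: (ne_of_disj dis_p's' aP' aS); rewrite eqxx.
    + left; split=> //.
      rewrite inE; apply: connect_trans (_ : connect _ x1 yy) (connect1 _).
        by move: yc; rewrite inE.
      by rewrite bip_adjE bP yS (lt_trans ba ayy) orbT.
  have M1sub : M.1 \subset N2.1.
    apply/subsetP=> z zM; have zp' := subsetP sM1 _ zM.
    case: (phiM z); first by rewrite inE zM.
      by move=> [_ zc]; rewrite inE zc zp'.
    by move=> [zs' _]; move: (ne_of_disj dis_p's' zp' zs'); rewrite eqxx.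
  have M2up : forall z, z \in M.2 -> exists2 yy, yy \in N2.2 & (z < yy)%O.
    move=> z zM; have zs' := subsetP sM2 _ zM.
    case: (phiM z); first by rewrite inE zM orbT.
      by move=> [zp' _]; move: (ne_of_disj dis_p's' zp' zs'); rewrite eqxx.
    by move=> [_ [yy yyS [zyy yyc]]]; exists yy => //; rewrite inE yyc yyS.
  have prop : Int M \proper Int N2.
    apply/properP; split.
      apply/subsetP=> z; rewrite !inE => /andP [/exists_inP [xx xxM xxz] /exists_inP [yy yyM zyy]].
      have [y2 y2N y2y] := M2up yy yyM.
      apply/andP; split; apply/exists_inP.
        by exists xx => //; apply: (subsetP M1sub).
      by exists y2 => //; exact: le_trans zyy (ltW y2y).
    have [y2 y2N y1y2] := M2up y1 y1M.
    exists y2.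
      rewrite !inE; apply/andP; split; apply/exists_inP.
        by exists x1; [apply: (subsetP M1sub) | exact: ltW (lt_trans x1y1 y1y2)].
      by exists y2.
    rewrite !inE negb_and; apply/orP; right; apply/negP=> /exists_inP [yy yyM y2yy].
    have e : y1 = yy.
      apply: (antichainP (A_anti Rs') (subsetP sM2 _ y1M) (subsetP sM2 _ yyM)).
      exact: le_trans (ltW y1y2) y2yy.
    by subst yy; move: (lt_le_trans y1y2 y2yy); rewrite ltxx.
  have ch : child A k M N2.
    exists s', p', s2; split.
      split=> //; first by rewrite s'3 (leq_trans s't' t'k).
      by rewrite !r_sqlt.
    by split=> //; left.
  have [y2 y2N yy2] := M2up y yM.
  have xy2 : (x < y2)%O := lt_trans xy yy2.
  case: (eqVneq (p', s2) (p, s)) => [/eqP|ne2].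
    rewrite xpair_eqE => /andP [/eqP ep /eqP es]; subst p s2.
    have y2s : y2 \in A s := subsetP (subsetIr _ _) _ y2N.
    have y2N' : y2 \in N.2 := adj_in_Y Rp Rs lt cN xN y2s xy2.
    have [e1 e2] := comp_eq dis_ps cN cN2 (z := y2) (introT setUP (or_intror y2N'))
                                  (introT setUP (or_intror y2N)).
    have eN : N2 = N by apply: pair_ext.
    by rewrite -eN; apply: desc_child.
  apply: (desc_step ch).
  have c2 : cnode s'.-1 p' s2 N2.
    split=> //; rewrite (leq_trans (leq_pred _) (leq_trans s't' t'k)) andbT.
    by rewrite -ltnS (ltn_predK ps).
  have cN' : cnode t p s N by split.
  apply: (IH s'.-1 p' s2 N2 t p s N _ c2 cN' lp ls2 ne2).
    by rewrite -ltnS (ltn_predK ps) (leq_trans s't' tn).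
  by exists x, y2; split.
- (* Case R: p' is the inserted antichain *)
  have tp' : (t < p')%N.
    case/orP: ne' => [/Hp //|/Hs ts]; exact: ltn_trans ts sp.
  have npp : p' != p by apply/eqP=> e; move: tp'; rewrite e ltnNge pt.
  have lpp : (r p < r p')%N.
    by rewrite ltn_neqAle lp andbT; apply/eqP=> /(r_inj Rp Rp') e; move: npp; rewrite e eqxx.
  have p'3 : (3 <= p')%N by apply: leq_ltn_trans t2' tp'.
  have pp' : (p < p')%N by apply: leq_ltn_trans pt tp'.
  have [p2 [p2p' /andP [p21 lp2p'] p2max]] :=
    @ex_argmax p' (fun q => (1 <= q)%N && (r q < r p')%N) r p pp' (introT andP (conj p1 lpp)).
  have Rp2 : inR p2 by rewrite /inR p21 (leq_trans (ltnW p2p') (leq_trans p't' t'k)).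
  have lp2 : (r p <= r p2)%N by apply: p2max => //; rewrite p1 lpp.
  have dis_p2p' := disjA Rp2 Rp' lp2p'.
  have lp2s' : (r p2 < r s')%N by apply: ltn_trans lp2p' lt'.
  have dis_p2s' := disjA Rp2 Rs' lp2s'.
  have cons2 : consecutive A p'.-1 p2 s'.
    apply: consecI.
    - exact: leq_trans (leq_pred _) (leq_trans p't' t'k).
    - by rewrite p21 -ltnS (ltn_predK sp).
    - by rewrite s'1 -ltnS (ltn_predK sp).
    - exact: lp2s'.
    move=> q /andP [q1 qle]; apply/negP=> /andP [l1 l2].
    have qp' : (q < p')%N by rewrite -(ltn_predK sp) ltnS.
    have Rq : inR q by rewrite /inR q1 (leq_trans (ltnW qp') (leq_trans p't' t'k)).
    case: (ltngtP (r q) (r p')) => [h|h|h].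
    + by move: (p2max q qp' (introT andP (conj q1 h))); rewrite leqNgt l1.
    + move: (nb' q (introT andP (conj q1 (leq_trans (ltnW qp') p't')))).
      by rewrite l2 h.
    + by move: qp'; rewrite (r_inj Rq Rp' h) ltnn.
  pose C2 := cls (A p2) (A s') y1.
  pose N2 := (C2 :&: A p2, C2 :&: A s').
  have y1s' : y1 \in A s' := subsetP sM2 _ y1M.
  have cN2 : component_of (A p2) (A s') N2.1 N2.2.
    by apply: comp_mk dis_p2s'; rewrite inE y1s' orbT.
  pose phi z := (z \in A s' /\ z \in C2) \/
                (z \in A p' /\ exists2 xx, xx \in A p2 & ((xx < z)%O /\ xx \in C2)).
  have upp := sqle_up Rp2 Rp' (r_lt_sqle Rp2 Rp' lp2p').
  have phiM : forall z, z \in M.1 :|: M.2 -> phi z.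
    have [v _ [eM1 eM2]] := comp_X dis_p's' cM.
    have y1v : y1 \in cls (A p') (A s') v by move: y1M; rewrite eM2 => /setIP [].
    move=> z; rewrite eM1 eM2 -setIUr => /setIP [zc _].
    rewrite -(cls_sym y1v) inE in zc.
    apply: (connect_ind' _ zc); last by left; split=> //; rewrite inE connect0.
    move=> a b; rewrite bip_adjE => /orP [/and3P [aP bS ab]|/and3P [bP aS ba]]
      [[aS' ac]|[aP' [xx xxP [xxa xc]]]].
    + by move: (ne_of_disj dis_p's' aP aS'); rewrite eqxx.
    + left; split=> //.
      rewrite inE; apply: connect_trans (_ : connect _ y1 xx) (connect1 _).
        by move: xc; rewrite inE.
      by rewrite bip_adjE xxP bS (lt_trans xxa ab).
    + right; split=> //.
      have /upP [xx xxP xxb] := subsetP upp _ bP.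
      have xxb' : (xx < b)%O by apply: lt_of_le_ne xxb (ne_of_disj dis_p2p' xxP bP).
      exists xx => //; split=> //.
      rewrite inE; apply: connect_trans (_ : connect _ y1 a) (connect1 _).
        by move: ac; rewrite inE.
      by rewrite bip_adjE xxP aS (lt_trans xxb' ba) orbT.
    + by move: (ne_of_disj dis_p's' aP' aS); rewrite eqxx.
  have M2sub : M.2 \subset N2.2.
    apply/subsetP=> z zM; have zs' := subsetP sM2 _ zM.
    case: (phiM z); first by rewrite inE zM orbT.
      by move=> [_ zc]; rewrite inE zc zs'.
    by move=> [zp' _]; move: (ne_of_disj dis_p's' zp' zs'); rewrite eqxx.
  have M1dn : forall z, z \in M.1 -> exists2 xx, xx \in N2.1 & (xx < z)%O.
    move=> z zM; have zp' := subsetP sM1 _ zM.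
    case: (phiM z); first by rewrite inE zM.
      by move=> [zs' _]; move: (ne_of_disj dis_p's' zp' zs'); rewrite eqxx.
    by move=> [_ [xx xxP [xxz xxc]]]; exists xx => //; rewrite inE xxc xxP.
  have prop : Int M \proper Int N2.
    apply/properP; split.
      apply/subsetP=> z; rewrite !inE => /andP [/exists_inP [xx xxM xxz] /exists_inP [yy yyM zyy]].
      have [x2 x2N x2x] := M1dn xx xxM.
      apply/andP; split; apply/exists_inP.
        by exists x2 => //; exact: le_trans (ltW x2x) xxz.
      by exists yy => //; apply: (subsetP M2sub).
    have [x2 x2N x2x1] := M1dn x1 x1M.
    exists x2.
      rewrite !inE; apply/andP; split; apply/exists_inP.
        by exists x2.
      by exists y1; [apply: (subsetP M2sub) | exact: ltW (lt_trans x2x1 x1y1)].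
    rewrite !inE negb_and; apply/orP; left; apply/negP=> /exists_inP [xx xxM xxx2].
    have e : xx = x1.
      apply: (antichainP (A_anti Rp') (subsetP sM1 _ xxM) (subsetP sM1 _ x1M)).
      exact: le_trans xxx2 (ltW x2x1).
    by subst xx; move: (le_lt_trans xxx2 x2x1); rewrite ltxx.
  have ch : child A k M N2.
    exists p', p2, s'; split.
      split=> //; first by rewrite p'3 (leq_trans p't' t'k).
      by rewrite !r_sqlt.
    by split=> //; right.
  have yN2 : y \in N2.2 := subsetP M2sub _ yM.
  case: (eqVneq (p2, s') (p, s)) => [/eqP|ne2].
    rewrite xpair_eqE => /andP [/eqP ep /eqP es]; subst p2 s'.
    have ys : y \in A s := subsetP sM2 _ yM.
    have yN' : y \in N.2 := adj_in_Y Rp Rs lt cN xN ys xy.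
    have [e1 e2] := comp_eq dis_ps cN cN2 (z := y) (introT setUP (or_intror yN'))
                                  (introT setUP (or_intror yN2)).
    have eN : N2 = N by apply: pair_ext.
    by rewrite -eN; apply: desc_child.
  apply: (desc_step ch).
  have c2 : cnode p'.-1 p2 s' N2.
    split=> //; rewrite (leq_trans (leq_pred _) (leq_trans p't' t'k)) andbT.
    by rewrite -ltnS (ltn_predK sp).
  have cN' : cnode t p s N by split.
  apply: (IH p'.-1 p2 s' N2 t p s N _ c2 cN' lp2 ls ne2).
    by rewrite -ltnS (ltn_predK sp) (leq_trans p't' tn).
  by exists x, y; split.
Qed.

Lemma r_le_sqle i j : inR i -> inR j -> (r i <= r j)%N -> sqle (A i) (A j).
Proof.
move=> Ri Rj; rewrite leq_eqVlt => /orP [/eqP e|lt]; last exact: r_lt_sqle.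
by rewrite (r_inj Ri Rj e) sqle_refl.
Qed.

Lemma up_up (X Y : {set T}) : up (up X :&: Y) \subset up X.
Proof.
apply/subsetP=> z /upP [y /setIP [/upP [x xX xy] _] yz].
by apply/upP; exists x => //; exact: le_trans xy yz.
Qed.

Lemma up_mono (X Y : {set T}) : X \subset Y -> up X \subset up Y.
Proof.
move=> sXY; apply/subsetP=> z /upP [x xX xz]; apply/upP; exists x => //.
exact: (subsetP sXY).
Qed.

Variables (F : {set {set T} * {set T}}) (S : {set T * T}).
Hypotheses (HF : forall N, N \in F -> is_node A k N) (AF : ancestor_free A k F)
           (AS : edge_antichain F S).

Lemma edge_node e : e \in S -> exists N t p s,
  [/\ N \in F, cnode t p s N, e.1 \in N.1, e.2 \in N.2 & (e.1 < e.2)%O].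
Proof.
case: AS => sub _ eS; have := subsetP sub _ eS; rewrite inE => /exists_inP [N NF /and3P [h1 h2 h3]].
have [t [p [s [t2 ct cN]]]] := HF NF.
by exists N, t, p, s; split.
Qed.

Lemma anti_S e f : e \in S -> f \in S -> e != f -> ~~ (e.2 <= f.1)%O.
Proof. by case: AS => _ H; apply: H. Qed.

Lemma cnode_props t p s N : cnode t p s N ->
  [/\ inR p, inR s, (r p < r s)%N, N.1 \subset A p & N.2 \subset A s].
Proof.
move=> [/andP [_ tk] ct cN]; have [Rp Rs lt _] := consecE tk ct.
have [sX sY _ _] := comp_props Rp Rs lt cN.
by split.
Qed.

Lemma fiber_level e0 t0 p0 s0 N0 f : e0 \in S -> N0 \in F -> cnode t0 p0 s0 N0 ->
  e0.1 \in N0.1 -> e0.2 \in N0.2 -> (e0.1 < e0.2)%O ->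
  f \in S -> f.1 = e0.1 -> f.2 \in A s0.
Proof.
move=> e0S N0F c0 e01 e02 lt0 fS ef.
have [Nf [tf [pf [sf [NfF cf f1 f2 ltf]]]]] := edge_node fS.
have [Rp0 Rs0 l0 s01 s02] := cnode_props c0.
have [Rpf Rsf lf sf1 sf2] := cnode_props cf.
have epf : pf = p0.
  by apply: (level_uniq Rpf Rp0 (subsetP sf1 _ f1)); rewrite ef (subsetP s01 _ e01).
subst pf.
case: (ltngtP (r sf) (r s0)) => [h|h|h].
- have ne : (p0, sf) != (p0, s0).
    by rewrite xpair_eqE negb_and; apply/orP; right; apply/eqP=> e; move: h; rewrite e ltnn.
  have D := @tree_desc tf tf p0 sf Nf t0 p0 s0 N0 (leqnn _) cf c0 (leqnn _) (ltnW h) ne.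
  case: (AF NfF N0F); apply: D; exists e0.1, f.2; split=> //; by rewrite -ef.
- have ne : (p0, s0) != (p0, sf).
    by rewrite xpair_eqE negb_and; apply/orP; right; apply/eqP=> e; move: h; rewrite e ltnn.
  have D := @tree_desc t0 t0 p0 s0 N0 tf p0 sf Nf (leqnn _) c0 cf (leqnn _) (ltnW h) ne.
  case: (AF N0F NfF); apply: D; exists f.1, e0.2; split=> //; by rewrite ef.
- by rewrite -(r_inj Rsf Rs0 h); apply: (subsetP sf2).
Qed.

Definition fiber a := [set f in S | f.1 == a].

Lemma fiber_card a : (#|fiber a| <= w)%N.
Proof.
case: (set_0Vmem (fiber a)) => [->|[e0]]; first by rewrite cards0.
rewrite inE => /andP [e0S /eqP ea].
have [N0 [t0 [p0 [s0 [N0F c0 e01 e02 lt0]]]]] := edge_node e0S.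
have [Rp0 Rs0 _ _ _] := cnode_props c0.
rewrite -(A_card Rs0) -(@card_in_imset _ _ (fun f : T * T => f.2)).
  apply: subset_leq_card; apply/subsetP=> y /imsetP [f]; rewrite inE => /andP [fS /eqP fa] ->.
  by apply: (fiber_level e0S N0F c0 e01 e02 lt0 fS); rewrite fa ea.
move=> f g; rewrite !inE => /andP [_ /eqP fa] /andP [_ /eqP ga] e.
by apply: pair_ext'; rewrite ?fa ?ga.
Qed.

Definition S1 := [set e.1 | e in S].
Definition eps a := odflt (a, a) [pick e in S | e.1 == a].

Lemma epsP a : a \in S1 -> eps a \in S /\ (eps a).1 = a.
Proof.
move=> /imsetP [e eS ->]; rewrite /eps; case: pickP => [f /andP [fS /eqP ->]|H] //=.
by move: (H e); rewrite eS eqxx.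
Qed.

Definition chainset (C : {set T}) := [forall x in C, forall y in C, (x <= y)%O || (y <= x)%O].

Lemma chainP (C : {set T}) x y : chainset C -> x \in C -> y \in C -> (x <= y)%O || (y <= x)%O.
Proof. by move=> /forall_inP H xC yC; move/forall_inP: (H x xC) => /(_ y yC). Qed.

Lemma chain_sub (C D : {set T}) : D \subset C -> chainset C -> chainset D.
Proof.
move=> sDC cC; apply/forall_inP=> x xD; apply/forall_inP=> y yD.
by apply: chainP cC _ _; apply: (subsetP sDC).
Qed.

Lemma chain_max (C : {set T}) : chainset C -> C != set0 -> exists2 c, c \in C & forall x, x \in C -> (x <= c)%O.
Proof.
move=> cC /set0Pn [x0' x0C].
case: (@arg_maxnP _ x0' (fun x => x \in C) (fun x => #|[set y | (y <= x)%O]|) x0C) => c cinC H.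
exists c => // x xC; case/orP: (chainP cC xC cinC) => // cx.
have [->|nxc] := eqVneq x c; first exact: lexx.
have lt : (c < x)%O by rewrite lt_neqAle cx eq_sym nxc.
have : [set y | (y <= c)%O] \proper [set y | (y <= x)%O].
  apply/properP; split.
    by apply/subsetP=> z; rewrite !inE => zc; exact: le_trans zc cx.
  by exists x; rewrite !inE ?lexx // lt_geF.
by move/proper_card; rewrite ltnNge; move: (H x xC) => /= ->.
Qed.

Definition Bs (X : {set T}) := [set (eps x).2 | x in X].

Lemma notup c (X : {set T}) : c \in S1 -> X \subset S1 -> c \notin X -> c \notin up (Bs X).
Proof.
move=> cS XS cX; apply/negP=> /upP [b /imsetP [x xX ->] le].
have [eS ex] := epsP (subsetP XS _ xX); have [cS' ec] := epsP cS.
have ne : eps x != eps c.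
  by apply/eqP=> e; move: cX; rewrite -ec -e ex xX.
by move: (anti_S eS cS' ne); rewrite ec le.
Qed.

Lemma chain_hall n : forall (C : {set T}) c p, (#|C| <= n)%N -> C \subset S1 -> chainset C -> c \in C ->
  (forall x, x \in C -> (x <= c)%O) -> inR p -> c \in A p ->
  (#|C| <= (#|up (Bs (C :\ c)) :&: A p|).+1)%N.
Proof.
elim: n => [|n IH] C c p Cn CS cC cinC cmax Rp cp.
  by move: Cn; rewrite leqn0 => /eqP/cards0_eq Ce; move: cinC; rewrite Ce inE.
have eC : #|C| = (#|C :\ c|).+1 by rewrite (cardsD1 c C) cinC.
case: (eqVneq (C :\ c) set0) => [e0|ne0].
  by rewrite eC e0 cards0.
have [c' c'C c'max] := chain_max (chain_sub (subsetDl C [set c]) cC) ne0.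
have c'C0 : c' \in C by move: c'C; rewrite inE => /andP [].
have nc'c : c' != c by move: c'C; rewrite !inE => /andP [].
have c'c : (c' < c)%O by rewrite lt_neqAle nc'c cmax.
have [ec'S ec'1] := epsP (subsetP CS _ c'C0).
have [N' [t' [p' [s' [N'F c'n e'1 e'2 e'lt]]]]] := edge_node ec'S.
have [Rp' Rs' lt' sN'1 sN'2] := cnode_props c'n.
have c'p' : c' \in A p' by rewrite -ec'1; apply: (subsetP sN'1).
have b's' : (eps c').2 \in A s' := subsetP sN'2 _ e'2.
have IH' := IH (C :\ c) c' p'.
have hIH : (#|C :\ c| <= (#|up (Bs (C :\ c :\ c')) :&: A p'|).+1)%N.
  apply: IH' => //.
  - by rewrite -ltnS -eC.
  - exact: subset_trans (subsetDl C [set c]) CS.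
  - exact: chain_sub (subsetDl C [set c]) cC.
set Q := up (Bs (C :\ c :\ c')) :&: A p' in hIH.
set Tg := up (Bs (C :\ c)) :&: A s'.
have [t'2 ct' _] := c'n.
have [Mm /andP [pmM c'bM]] : exists M, perfect_matching (A p') (A s') M && ((c', (eps c').2) \in M).
  apply: (A_reg t'2 ct' c'p' b's'); by rewrite -{1}ec'1.
have sBs : forall X Y : {set T}, X \subset Y -> Bs X \subset Bs Y.
  by move=> X Y sXY; apply: imsetS.
have QT : (#|Q| < #|Tg|)%N.
  apply: (pm_surplus pmM (subsetIr _ _) c'bM).
  - rewrite /Q inE negb_and; apply/orP; left; apply: notup.
    + exact: (subsetP CS).
    + exact: subset_trans (subsetDl _ _) (subset_trans (subsetDl C [set c]) CS).
    + by rewrite !inE eqxx.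
  - move=> q yy; rewrite inE => /andP [/upP [b bB bq] _] yys qyy; rewrite inE yys andbT.
    apply/upP; exists b; last exact: le_trans bq (ltW qyy).
    by apply: (subsetP (sBs _ _ (subsetDl _ [set c']))).
  - rewrite inE b's' andbT; apply/upP; exists (eps c').2 => //.
    by apply/imsetP; exists c'.
have [ecS ec1] := epsP (subsetP CS _ cinC).
have [Nc [tc [pc [sc [NcF ccn ec1n ec2n eclt]]]]] := edge_node ecS.
have [Rpc Rsc ltc sNc1 sNc2] := cnode_props ccn.
have epc : pc = p.
  apply: (level_uniq (x := c) Rpc Rp _ cp); rewrite -{1}ec1; exact: (subsetP sNc1).
subst pc.
have lp'p : (r p' < r p)%N := lt_level Rp' Rp c'p' cp c'c.
have nstr : (r s' <= r p)%N.
  rewrite leqNgt; apply/negP=> lps'.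
  have [/andP [_ t'k] _ _] := c'n; have [/andP [_ tck] ctc _] := ccn.
  have [_ _ _ nb'] := consecE t'k ct'.
  have [_ _ _ nbc] := consecE tck ctc.
  have [/andP [_ p't'] /andP [_ s't']] := consec_le ct'.
  have [/andP [p1 ptc] /andP [s'1 _]] := consec_le ctc.
  have lam : (r sc <= r s')%N.
    rewrite leqNgt; apply/negP=> lss.
    have tp : (t' < p)%N.
      rewrite ltnNge; apply/negP=> pt'.
      by move: (nb' p (introT andP (conj p1 pt'))); rewrite lp'p lps'.
    have ts : (tc < s')%N.
      rewrite ltnNge; apply/negP=> st.
      have s'1' : (0 < s')%N by case/andP: Rs'.
      by move: (nbc s' (introT andP (conj s'1' st))); rewrite lps' lss.
    by move: (leq_ltn_trans s't' (leq_ltn_trans (ltnW tp) (leq_ltn_trans ptc ts))); rewrite ltnn.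
  have ne : (p, sc) != (p', s').
    rewrite xpair_eqE negb_and; apply/orP; left; apply/eqP=> e.
    by move: lp'p; rewrite e ltnn.
  have [/andP [_ tck'] _ _] := ccn.
  have D := @tree_desc tc tc p sc Nc t' p' s' N' (leqnn _) ccn c'n (ltnW lp'p) lam ne.
  case: (AF NcF N'F); apply: D; exists c', (eps c).2; split=> //.
    by rewrite -ec'1.
  by apply: lt_trans c'c _; rewrite -{1}ec1.
have sq := r_le_sqle Rs' Rp nstr.
have hT := hall Rs' Rp sq (subsetIr (up (Bs (C :\ c))) (A s')).
have sub2 : up Tg :&: A p \subset up (Bs (C :\ c)) :&: A p by apply: setSI; apply: up_up.
rewrite eC ltnS; apply: (leq_trans hIH).
exact: leq_trans QT (leq_trans hT (subset_leq_card sub2)).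
Qed.

Lemma chain_bound (C : {set T}) : C \subset S1 -> chainset C -> (#|C| <= w)%N.
Proof.
move=> CS cC; case: (eqVneq C set0) => [->|ne]; first by rewrite cards0.
have [c cC' cmax] := chain_max cC ne.
have [p Rp cp] := A_cover c.
have H := chain_hall (leqnn _) CS cC cC' cmax Rp cp.
have sub : up (Bs (C :\ c)) :&: A p \subset A p :\ c.
  apply/subsetP=> z /setIP [zu zp]; rewrite !inE zp andbT; apply/eqP=> e; subst z.
  move: zu; apply/negP; apply: notup.
  - exact: (subsetP CS).
  - exact: subset_trans (subsetDl _ _) CS.
  - by rewrite !inE eqxx.
have e := cardsD1 c (A p); rewrite cp A_card // add1n in e.
have h := subset_leq_card sub.
by apply: (leq_trans H); rewrite e ltnS.
Qed.

Definition hcond x (C : {set T}) := [&& C \subset S1, chainset C, x \in C & [forall y in C, (y <= x)%O]].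
Definition hh x := \max_(C : {set T} | hcond x C) #|C|.

Lemma hcond1 x : x \in S1 -> hcond x [set x].
Proof.
move=> xS; apply/and4P; split.
- by rewrite sub1set.
- by apply/forall_inP=> a; rewrite inE => /eqP ->; apply/forall_inP=> b; rewrite inE => /eqP ->; rewrite lexx.
- by rewrite inE.
- by apply/forall_inP=> a; rewrite inE => /eqP ->.
Qed.

Lemma hh_le x : (hh x <= w)%N.
Proof. by apply/bigmax_leqP=> C /and4P [CS cC _ _]; apply: chain_bound. Qed.

Lemma hh_ge x : x \in S1 -> (1 <= hh x)%N.
Proof.
move=> xS; rewrite /hh.
have := @leq_bigmax_cond _ (hcond x) (fun C : {set T} => #|C|) _ (hcond1 xS).
by rewrite cards1.
Qed.

Lemma hh_lt x y : x \in S1 -> y \in S1 -> (x < y)%O -> (hh x < hh y)%N.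
Proof.
move=> xS yS xy.
have e := @bigop.bigmax_eq_arg _ [set x] (hcond x) (fun C : {set T} => #|C|) (hcond1 xS).
rewrite /hh e.
case: arg_maxnP => [|C0 /and4P [C0S cC0 xC0 /forall_inP C0x] _]; first exact: hcond1.
have yC0 : y \notin C0.
  by apply/negP=> /C0x yx; move: (lt_le_trans xy yx); rewrite ltxx.
have hD : hcond y (y |: C0).
  apply/and4P; split.
  - by rewrite subUset sub1set yS C0S.
  - apply/forall_inP=> a; rewrite !inE => /orP [/eqP ->|aC];
      apply/forall_inP=> b; rewrite !inE => /orP [/eqP ->|bC].
    + by rewrite lexx.
    + by rewrite (le_trans (C0x b bC) (ltW xy)) orbT.
    + by rewrite (le_trans (C0x a aC) (ltW xy)).
    + exact: chainP cC0 aC bC.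
  - by rewrite !inE eqxx.
  - apply/forall_inP=> z; rewrite !inE => /orP [/eqP ->|zC]; first exact: lexx.
    exact: le_trans (C0x z zC) (ltW xy).
have := @leq_bigmax_cond _ (hcond y) (fun C : {set T} => #|C|) _ hD.
by rewrite cardsU1 yC0 add1n.
Qed.

Lemma S1_card : (#|S1| <= w * w)%N.
Proof.
pose H (i : 'I_w) := [set x in S1 | hh x == i.+1].
have aH : forall i, antichain (H i).
  move=> i; apply: antichainI=> a b; rewrite !inE => /andP [aS /eqP ha] /andP [bS /eqP hb] ab.
  have [->//|nab] := eqVneq a b.
  have := hh_lt aS bS (lt_of_le_ne ab nab); by rewrite ha hb ltnn.
have sub : S1 \subset \bigcup_(i < w) H i.
  apply/subsetP=> x xS.
  have hx : ((hh x).-1 < w)%N by rewrite prednK ?hh_ge // hh_le.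
  apply/bigcupP; exists (Ordinal hx) => //.
  by rewrite inE xS /= prednK ?hh_ge.
apply: leq_trans (subset_leq_card sub) _.
apply: leq_trans (card_bigcup_le _ _) _.
rewrite -[X in (_ <= X * _)%N](card_ord w) -sum_nat_const.
by apply: leq_sum=> i _; apply: width_ge.
Qed.

Lemma S_card : (#|S| <= w ^ 3)%N.
Proof.
have sub : S \subset \bigcup_(a in S1) fiber a.
  apply/subsetP=> e eS; apply/bigcupP; exists e.1; first by apply/imsetP; exists e.
  by rewrite inE eS eqxx.
apply: leq_trans (subset_leq_card sub) _.
apply: leq_trans (card_bigcup_le _ _) _.
apply: leq_trans (_ : (\sum_(a in S1) w <= _)%N).
  by apply: leq_sum => a _; apply: fiber_card.
rewrite sum_nat_const (_ : w ^ 3 = w * w * w)%N; last by rewrite !expnS expn0 muln1 mulnA.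
by rewrite leq_mul2r S1_card orbT.
Qed.

End RP.

Theorem lemma12 (d : Order.disp_t) (T : finPOrderType d)
    (A : nat -> {set T}) (k : nat) :
  regular_poset A k ->
  forall F : {set {set T} * {set T}},
    (forall N, N \in F -> is_node A k N) ->
    ancestor_free A k F ->
    forall S : {set T * T}, edge_antichain F S ->
      (#|S| <= (@width d T) ^ 3)%N.
Proof.
move=> RP F HF AF S AS.
case: (set_0Vmem S) => [->|[e eS]]; first by rewrite cards0.
exact: (@S_card d T A k RP e.1 F S HF AF AS).
Qed.
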